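(* The closure (in the sup norm) of the convex hull of $\{h_A: A\subseteq[0,\pi]\text{ Lebesgue measurable}\}$ coincides with $\mathbf{E}(\mathbb{S}^1)$.
   Context: $\mathbb{S}^1=\mathbb{R}/2\pi$ with its geodesic metric. For a metric space $X$, $\Delta(X)=\{f:X\to\mathbb{R}\text{ bounded}:f(x)+f(x')\ge d_X(x,x')\}$ and the tight span $\mathbf{E}(X)$ is the set of pointwise-minimal elements of $\Delta(X)$ with the sup-norm metric. For $\theta\in\mathbb{R}$, $g_\theta:\mathbb{S}^1\to\mathbb{R}$ is $g_\theta(\varphi)=\frac12$ if $\varphi\in[\theta,\theta+\pi)$ (mod $2\pi$) and $-\frac12$ otherwise. For a Lebesgue measurable $A\subseteq[0,\pi]$, $h_A:\mathbb{S}^1\to\mathbb{R}$ is $h_A(\varphi)=\frac{\pi}{2}+\int_0^\pi g_\theta(\varphi)\big(1_A(\theta)-1_{[0,\pi]\setminus A}(\theta)\big)\,d\theta$. *)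

(* Defs.v *)
From mathcomp Require Import all_boot all_order all_algebra.
From mathcomp Require Import all_classical all_reals all_analysis.
Set Implicit Arguments. Unset Strict Implicit. Unset Printing Implicit Defensive.
Import Order.TTheory GRing.Theory Num.Theory.
Local Open Scope classical_set_scope.
Local Open Scope ring_scope.

(* S^1 = R / 2pi.  Points of S^1 are represented by reals; functions on S^1
   are represented by 2pi-periodic functions R -> R. *)

Definition circ_periodic {R : realType} (f : R -> R) : Prop :=
  forall x : R, f (x + 2 * pi) = f x.

Definition circ_red {R : realType} (x : R) : R :=
  x - 2 * pi * (Num.floor (x / (2 * pi)))%:~R.

Definition circ_dist {R : realType} (x y : R) : R :=
  Num.min (circ_red (x - y)) (2 * pi - circ_red (x - y)).

Definition Delta_circ {R : realType} (f : R -> R) : Prop :=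
  [/\ circ_periodic f,
      (exists M : R, forall x, `|f x| <= M) &
      forall x y : R, circ_dist x y <= f x + f y].

Definition tight_span_circ {R : realType} : set (R -> R) :=
  [set f | Delta_circ f /\
     forall g : R -> R, Delta_circ g -> (forall x, g x <= f x) -> g = f].

Definition g_theta {R : realType} (theta phi : R) : R :=
  if circ_red (phi - theta) < pi then 1 / 2 else - (1 / 2).

Definition I0pi {R : realType} : set R := `[0, pi].

(* Lebesgue measurable subsets of R: the Caratheodory sigma-algebra of the
   Lebesgue outer measure, i.e. the domain of completed_lebesgue_measure *)
Definition lebesgue_measurable {R : realType} (A : set R) : Prop :=
  ((wlength (@idfun R))^*)%mu.-cara.-measurable A.

Definition h_A {R : realType} (A : set R) (phi : R) : R :=
  pi / 2 + Rintegral (@completed_lebesgue_measure R) I0pi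
    (fun theta => g_theta theta phi * (\1_A theta - \1_(I0pi `\` A) theta)).

Definition conv_hull {R : realType} (S : set (R -> R)) : set (R -> R) :=
  [set f | exists (n : nat) (w : 'I_n -> R) (fs : 'I_n -> R -> R),
     [/\ forall i, S (fs i), forall i, 0 <= w i, \sum_(i < n) w i = 1 &
         f = fun x => \sum_(i < n) w i * fs i x]].

Definition sup_closure {R : realType} (S : set (R -> R)) : set (R -> R) :=
  [set f | forall e : R, 0 < e -> exists g, S g /\ forall x, `|f x - g x| <= e].

Definition hA_family {R : realType} : set (R -> R) :=
  [set f | exists A : set R, [/\ lebesgue_measurable A, A `<=` I0pi & f = h_A A]].

(* Main.v *)
Require Import Defs.
From mathcomp Require Import all_boot all_order all_algebra.
From mathcomp Require Import all_classical all_reals all_analysis.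
From mathcomp Require Import lra zify ring.
Set Implicit Arguments. Unset Strict Implicit. Unset Printing Implicit Defensive.
Import Order.TTheory GRing.Theory Num.Theory.
Local Open Scope classical_set_scope.
Local Open Scope ring_scope.

Section P0.
Variable R : realType.
Implicit Types x y z u : R.

Lemma pi_pos : (0 : R) < pi. Proof. exact: pi_gt0. Qed.
Lemma tpi_pos : (0 : R) < 2 * pi. Proof. by rewrite mulr_gt0 // pi_pos. Qed.

Lemma red_spec x : 0 <= circ_red x < 2 * pi /\
  exists k : int, x = circ_red x + 2 * pi * k%:~R.
Proof.
have hp := tpi_pos.
rewrite /circ_red; split; last first.
  by exists (Num.floor (x / (2 * pi))); rewrite subrK.
have /andP[h1 h2] := floor_itv (x / (2 * pi)).
rewrite subr_ge0 ltrBlDl; apply/andP; split.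
  by rewrite mulrC -ler_pdivlMr.
by move: h2; rewrite ltr_pdivrMr // intrD mulrDl mul1r [_%:~R * _]mulrC.
Qed.

Lemma red_uniq x u (k : int) : 0 <= u < 2 * pi -> x = u + 2 * pi * k%:~R ->
  circ_red x = u.
Proof.
have hp := tpi_pos.
move=> /andP[u0 u1] ->; rewrite /circ_red.
have -> : Num.floor ((u + 2 * pi * k%:~R) / (2 * pi)) = k.
  apply: floor_def; rewrite mulrDl mulrAC divff ?gt_eqF // mul1r intrD.
  rewrite lerDr divr_ge0 ?(ltW hp) //= addrC ltrD2l ltr_pdivrMr // mul1r //.
by rewrite addrK.
Qed.

End P0.

Section P0b.
Variable R : realType.
Implicit Types x y z u a b : R.
Local Notation d := (@circ_dist R).

Lemma min_facts a b : Num.min a b <= a /\ Num.min a b <= b /\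
  (Num.min a b = a \/ Num.min a b = b).
Proof.
rewrite ge_min lexx ge_min lexx orbT /=. split=>//. split=>//.
rewrite /Num.min. case: ifP; by [left|right].
Qed.

Lemma red_shift x (k : int) : circ_red (x + 2 * pi * k%:~R) = circ_red x.
Proof.
have [h [m hm]] := red_spec x.
apply: (red_uniq (k := m + k)) => //.
by rewrite {1}hm intrD; ring.
Qed.

Lemma dist_facts x y : 0 <= circ_red (x - y) < 2 * pi /\
  d x y <= circ_red (x - y) /\ d x y <= 2 * pi - circ_red (x - y) /\
  (d x y = circ_red (x - y) \/ d x y = 2 * pi - circ_red (x - y)).
Proof.
have [h _] := red_spec (x - y).
by split => //; rewrite /circ_dist; apply: min_facts.
Qed.

Lemma dist_le x y (k : int) : d x y <= `|x - y - 2 * pi * k%:~R|.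
Proof.
have [h [m hm]] := red_spec (x - y).
have [/andP[r0 r1] [d1 [d2 _]]] := dist_facts x y.
set r := circ_red (x - y) in hm r0 r1 d1 d2.
have -> : x - y - 2 * pi * k%:~R = r + 2 * pi * (m - k)%:~R.
  by rewrite hm intrB; ring.
have hp := pi_pos R.
set v := r + _.
have := ler_norm v; have := ler_norm (- v); rewrite normrN.
have [j0|j0] := lerP 0 (m - k).
  have : 0 <= 2 * (pi : R) * (m - k)%:~R.
    by apply: mulr_ge0; [exact: ltW (tpi_pos R) | rewrite ler0z].
  rewrite /v; lra.
have : (m - k)%:~R <= (-1 : R) by rewrite -[-1 : R]/((-1 : int)%:~R) ler_int; lia.
move=> hj.
have : 2 * (pi : R) * (m - k)%:~R <= 2 * pi * (-1) by rewrite ler_pM2l // mulr_gt0.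
rewrite /v; lra.
Qed.


Lemma intr0R : (0 : int)%:~R = 0 :> R. Proof. by []. Qed.

Lemma dist_att x y : exists k : int, d x y = `|x - y - 2 * pi * k%:~R|.
Proof.
have [h [m hm]] := red_spec (x - y).
have [/andP[r0 r1] [d1 [d2 d3]]] := dist_facts x y.
set r := circ_red (x - y) in hm r0 r1 d1 d2 d3.
case: d3 => ->.
  by exists m; rewrite hm addrK ger0_norm.
exists (m + 1).
have -> : x - y - 2 * pi * (m + 1)%:~R = r - 2 * pi.
  by rewrite hm intrD (_ : 1%:~R = 1 :> R) //; ring.
by rewrite ltr0_norm ?opprB // subr_lt0.
Qed.

Lemma dist_ge0 x y : 0 <= d x y.
Proof.
have [/andP[r0 r1] [d1 [d2 d3]]] := dist_facts x y.
case: d3 => ->; lra.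
Qed.

Lemma dist_lepi x y : d x y <= pi.
Proof. have [/andP[r0 r1] [d1 [d2 d3]]] := dist_facts x y; lra. Qed.

Lemma dist_abs x y : d x y <= `|x - y|.
Proof. by have := dist_le x y 0; rewrite intr0R mulr0 subr0. Qed.

Lemma dist_xx x : d x x = 0.
Proof.
apply/eqP; rewrite eq_le dist_ge0 andbT.
by have := dist_abs x x; rewrite subrr normr0.
Qed.

Lemma dist_sym x y : d x y = d y x.
Proof.
suff H : forall x y, d y x <= d x y by apply/eqP; rewrite eq_le !H.
move=> a b; have [k ->] := dist_att a b.
have := dist_le b a (- k); rewrite -normrN.
by rewrite (_ : - (b - a - 2 * pi * (- k)%:~R) = a - b - 2 * pi * k%:~R) // intrN; ring.
Qed.

Lemma dist_tri x y z : d x z <= d x y + d y z.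
Proof.
have [k1 ->] := dist_att x y; have [k2 ->] := dist_att y z.
apply: (le_trans (dist_le x z (k1 + k2))).
rewrite (_ : x - z - 2 * pi * (k1 + k2)%:~R =
  (x - y - 2 * pi * k1%:~R) + (y - z - 2 * pi * k2%:~R)); last by rewrite intrD; ring.
exact: ler_normD.
Qed.

Lemma dist_shiftl x y (k : int) : d (x + 2 * pi * k%:~R) y = d x y.
Proof.
rewrite /circ_dist (_ : x + 2 * pi * k%:~R - y = (x - y) + 2 * pi * k%:~R);
  last by ring.
by rewrite red_shift.
Qed.

Lemma dist_shiftr x y (k : int) : d x (y + 2 * pi * k%:~R) = d x y.
Proof. by rewrite dist_sym dist_shiftl dist_sym. Qed.

Lemma dist_pi x y : d (x + pi) y = pi - d x y.
Proof.
have [h [m hm]] := red_spec (x - y).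
have [/andP[r0 r1] [d1 [d2 d3]]] := dist_facts x y.
have [/andP[r0' r1'] [d1' [d2' d3']]] := dist_facts (x + pi) y.
set r := circ_red (x - y) in hm r0 r1 d1 d2 d3.
have hp := pi_pos R.
have [rlt|rge] := ltrP r pi.
  have e : circ_red (x + pi - y) = r + pi.
    apply: (red_uniq (k := m)); first by apply/andP; split; lra.
    have -> : x + pi - y = (x - y) + pi by ring.
    by rewrite hm; ring.
  rewrite e in r0' r1' d1' d2' d3'.
  by case: d3; case: d3'; lra.
have e : circ_red (x + pi - y) = r - pi.
  apply: (red_uniq (k := m + 1)); first by apply/andP; split; lra.
  have -> : x + pi - y = (x - y) + pi by ring.
  by rewrite hm intrD (_ : 1%:~R = 1 :> R) //; ring.
rewrite e in r0' r1' d1' d2' d3'.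
by case: d3; case: d3'; lra.
Qed.

Lemma dist_small a b : 0 <= a < pi -> 0 <= b < pi -> d a b = `|a - b|.
Proof.
move=> /andP[a0 a1] /andP[b0 b1].
have [/andP[r0 r1] [d1 [d2 d3]]] := dist_facts a b.
have hp := pi_pos R.
have [ba|ab] := lerP b a.
  have e : circ_red (a - b) = a - b.
    apply: (red_uniq (k := 0)); first by apply/andP; split; lra.
    by rewrite intr0R mulr0 addr0.
  rewrite e in r0 r1 d1 d2 d3.
  by case: d3; lra.
have e : circ_red (a - b) = a - b + 2 * pi.
  apply: (red_uniq (k := -1)); first by apply/andP; split; lra.
  by rewrite (_ : (-1)%:~R = -1 :> R) //; ring.
rewrite e in r0 r1 d1 d2 d3.
by case: d3; lra.
Qed.

End P0b.

Section P1.
Variable R : realType.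
Implicit Types x y z u a b v : R.
Local Notation d := (@circ_dist R).

Lemma periodic_nat (f : R -> R) : circ_periodic f ->
  forall x (n : nat), f (x + 2 * pi * n%:R) = f x.
Proof.
move=> hf x; elim=> [|n IH]; first by rewrite mulr0 addr0.
have -> : x + 2 * pi * n.+1%:R = (x + 2 * pi * n%:R) + 2 * pi.
  by rewrite -natr1; ring.
by rewrite hf.
Qed.

Lemma periodic_int (f : R -> R) : circ_periodic f ->
  forall x (k : int), f (x + 2 * pi * k%:~R) = f x.
Proof.
move=> hf x [n|n]; first by rewrite periodic_nat.
rewrite NegzE -[in RHS](subrK (2 * pi * n.+1%:R) x) periodic_nat //.
by congr f; rewrite intrN mulrN.
Qed.

Definition Pc (f : R -> R) : Prop :=
  [/\ circ_periodic f, forall x, f x + f (x + pi) = pi &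
      forall x y, f x <= f y + d x y].

Lemma dist_antip x : d x (x + pi) = pi.
Proof. by rewrite dist_sym dist_pi dist_xx subr0. Qed.

Lemma dist_pir x y : d x (y + pi) = pi - d x y.
Proof. by rewrite dist_sym dist_pi dist_sym. Qed.

Lemma Pc_Delta f : Pc f -> Delta_circ f.
Proof.
case=> hp ha hl; split => //.
  exists (`|f 0| + pi) => x; rewrite ler_norml.
  have := hl x 0; have := hl 0 x; have := dist_lepi x 0; have := dist_lepi 0 x.
  have := ler_norm (f 0); have := ler_norm (- f 0); rewrite normrN.
  move=> *; apply/andP; split; lra.
move=> x y; have := hl (x + pi) y; rewrite dist_pi; have := ha x; lra.
Qed.

Lemma Pc_tight f : Pc f -> tight_span_circ f.
Proof.
move=> hP; split; first exact: Pc_Delta.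
case: hP => hp ha hl g [gp gb gd] gf.
apply/funext => x; apply/eqP; rewrite eq_le gf /=.
have := gd x (x + pi); rewrite dist_antip.
have := gf (x + pi); have := ha x; lra.
Qed.

Lemma dist0_eq x y : d x y = 0 -> exists k : int, y = x + 2 * pi * k%:~R.
Proof.
have [k ->] := dist_att x y => /normr0_eq0 h.
exists (- k); rewrite intrN mulrN; lra.
Qed.

Lemma tight_mod f : tight_span_circ f ->
  forall x0 v, 0 <= v -> (forall y, d x0 y <= v + f y) -> f x0 <= v.
Proof.
move=> [[fp [M fb] fd] fmin] x0 v v0 hv.
rewrite leNgt; apply/negP => vlt.
pose g y := if d x0 y == 0 then v else f y.
have gx0 : g x0 = v by rewrite /g dist_xx eqxx.
have gle : forall y, g y <= f y.
  move=> y; rewrite /g; case: ifP => [/eqP/dist0_eq [k ->]|]; last by [].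
  by rewrite periodic_int // ltW.
have gD : Delta_circ g.
  split.
  - move=> y; rewrite /g (_ : y + 2 * pi = y + 2 * pi * (1 : int)%:~R);
      last by rewrite mulr1.
    by rewrite dist_shiftr (_ : (1:int)%:~R = 1 :> R) // mulr1 fp.
  - exists (M + v) => y; rewrite /g; case: ifP => _.
      rewrite ger0_norm //; have := fb x0; have := normr_ge0 (f x0); lra.
    have := fb y; have := fb x0; have := normr_ge0 (f x0); lra.
  - move=> y y'; rewrite /g.
    have t1 := dist_tri y x0 y'; have t2 := dist_tri x0 y y'.
    have t3 := dist_tri x0 y' y.
    rewrite (dist_sym y x0) in t1.
    rewrite (dist_sym y' y) in t3.
    have := hv y; have := hv y'; have := fd y y'.
    have := dist_ge0 y y'.
    case: ifP => /eqP e1; case: ifP => /eqP e2; rewrite ?e1 ?e2 in t1 t2 t3 *;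
      move=> *; lra.
have := fmin g gD gle => /(congr1 (fun h => h x0)); rewrite gx0 => e.
by move: vlt; rewrite -e ltxx.
Qed.

Lemma tight_Pc f : tight_span_circ f -> Pc f.
Proof.
move=> ht; have := ht => -[[fp fb fd] _].
have f0 : forall x, 0 <= f x.
  by move=> x; have := fd x x; rewrite dist_xx; lra.
have hl : forall x y, f x <= f y + d x y.
  move=> x z; apply: (tight_mod ht).
    by rewrite addr_ge0 // dist_ge0.
  move=> y; have := dist_tri x z y; have := fd z y; lra.
split => // x.
apply/eqP; rewrite eq_le; apply/andP; split; last first.
  by have := fd x (x + pi); rewrite dist_antip.
have [c0|c0] := lerP 0 (pi - f (x + pi)).
  suff : f x <= pi - f (x + pi) by lra.
  apply: (tight_mod ht) => // y.
  have := hl (x + pi) y; rewrite dist_pi; lra.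
have : f x <= 0.
  apply: (tight_mod ht) => // y.
  have := hl (x + pi) y; rewrite dist_pi; lra.
have := hl (x + pi) x; rewrite dist_pi dist_xx; have := f0 x; lra.
Qed.

End P1.

Section P2.
Variable R : realType.
Implicit Types x y z u a b v : R.
Local Notation d := (@circ_dist R).


Lemma Pc_conv n (w : 'I_n -> R) (fs : 'I_n -> R -> R) :
  (forall i, Pc (fs i)) -> (forall i, 0 <= w i) -> \sum_(i < n) w i = 1 ->
  Pc (fun x => \sum_(i < n) w i * fs i x).
Proof.
move=> hP w0 w1; split.
- move=> x; apply: eq_bigr => i _; by case: (hP i) => ->.
- move=> x; rewrite -big_split /=.
  rewrite (eq_bigr (fun i => w i * pi)); first by rewrite -mulr_suml w1 mul1r.
  by move=> i _; rewrite -mulrDr; case: (hP i) => _ ->.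
- move=> x y.
  have -> : \sum_(i < n) w i * fs i y + d x y =
            \sum_(i < n) (w i * fs i y + w i * d x y).
    by rewrite big_split /= -mulr_suml w1 mul1r.
  apply: ler_sum => i _; rewrite -mulrDr ler_wpM2l //.
  by case: (hP i) => _ _ ->.
Qed.

Lemma close_le a b : (forall e, 0 < e -> a <= b + e) -> a <= b.
Proof. by move=> h; apply/ler_addgt0Pr. Qed.

Lemma Pc_closure (S : set (R -> R)) f :
  (forall g, S g -> Pc g) -> sup_closure S f -> Pc f.
Proof.
move=> hS hcl.
have H : forall e, 0 < e -> exists g, Pc g /\ forall x, f x - e <= g x <= f x + e.
  move=> e e0; have [g [Sg hg]] := hcl e e0; exists g; split; first exact: hS.
  by move=> x; have := hg x; rewrite ler_norml => /andP[h1 h2]; apply/andP; split; lra.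
split.
- move=> x; apply/eqP; rewrite eq_le; apply/andP; split; apply: close_le => e e0;
  have [g [[gp ga gl] hg]] := H (e / 2) (divr_gt0 e0 (ltr0Sn _ _));
  have := hg x; have := hg (x + 2 * pi); rewrite gp => /andP[? ?] /andP[? ?]; lra.
- move=> x; apply/eqP; rewrite eq_le; apply/andP; split; apply: close_le => e e0;
  have [g [[gp ga gl] hg]] := H (e / 4) (divr_gt0 e0 (ltr0Sn _ _));
  have := hg x; have := hg (x + pi); have := ga x => ? /andP[? ?] /andP[? ?]; lra.
- move=> x y; apply: close_le => e e0.
  have [g [[gp ga gl] hg]] := H (e / 2) (divr_gt0 e0 (ltr0Sn _ _)).
  have := hg x; have := hg y; have := gl x y => ? /andP[? ?] /andP[? ?]; lra.
Qed.

End P2.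

Section P3.
Variable R : realType.
Local Notation T := (caratheodory_type (R:=R) (wlength (@idfun R))^*%mu).
Local Notation mu := (@completed_lebesgue_measure R).
Local Notation I := (@I0pi R).
Local Notation m B := (fine (mu B)).

Lemma itv_cara (i : interval R) : measurable ([set` i] : set T).
Proof. apply: sub_caratheodory; exact: measurable_itv. Qed.

Lemma mu_itv (i : interval R) : mu [set` i] =
  (if (i.1 < i.2)%E then ((i.2 : \bar R) - i.1)%E else 0%E).
Proof. exact: lebesgue_measure_itv. Qed.

Lemma mI : measurable (I : set T). Proof. exact: itv_cara. Qed.

Lemma muI : mu I = pi%:E.
Proof.
by rewrite /I0pi mu_itv /= lte_fin pi_pos -EFinD subr0.
Qed.

Lemma muI_fin : (mu I < +oo)%E.
Proof. by rewrite muI ltry. Qed.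

Lemma indic_bounded (B : set R) : [bounded (\1_B x : R) | x in (I : set T)].
Proof.
rewrite /bounded_near; near=> M. move=> x _ /=.
have : `|(\1_B x : R)| <= 1 by rewrite indicE; case: (x \in B); rewrite ?normr1 ?normr0.
move=> h; apply: le_trans h _.
near: M; apply: nbhs_pinfty_ge; exact: num_real.
Unshelve. all: by end_near.
Qed.

Lemma int_indic (B : set T) : measurable B ->
  mu.-integrable I (EFin \o (\1_B : T -> R)).
Proof.
move=> mB; apply: measurable_bounded_integrable.
- exact: mI.
- exact: muI_fin.
- exact: measurable_realfun.measurable_indic.
- exact: indic_bounded.
Qed.

Lemma int_Z a (f : T -> R) : mu.-integrable I (EFin \o f) ->
  mu.-integrable I (EFin \o (fun x => a * f x)).
Proof.
move=> h; have := integrableZl mI a h; apply: eq_integrable => //.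
exact: mI.
Qed.

Lemma int_D (f g : T -> R) : mu.-integrable I (EFin \o f) ->
  mu.-integrable I (EFin \o g) ->
  mu.-integrable I (EFin \o (fun x => f x + g x)).
Proof.
move=> hf hg; have := integrableD mI hf hg; apply: eq_integrable => //.
exact: mI.
Qed.

Lemma Rint_indic (B : set T) : measurable B -> B `<=` I ->
  Rintegral mu I (\1_B : T -> R) = m B.
Proof.
move=> mB BI; rewrite /Rintegral integral_indic //; last exact: mI.
by rewrite setIidl.
Qed.

Lemma Rint4 (B1 B2 B3 B4 : set T) (a1 a2 a3 a4 : R) :
  measurable B1 -> measurable B2 -> measurable B3 -> measurable B4 ->
  B1 `<=` I -> B2 `<=` I -> B3 `<=` I -> B4 `<=` I ->
  Rintegral mu I (fun x => a1 * \1_B1 x + a2 * \1_B2 x + a3 * \1_B3 x + a4 * \1_B4 x)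
  = a1 * m B1 + a2 * m B2 + a3 * m B3 + a4 * m B4.
Proof.
move=> m1 m2 m3 m4 s1 s2 s3 s4.
have i1 := int_Z a1 (int_indic m1); have i2 := int_Z a2 (int_indic m2).
have i3 := int_Z a3 (int_indic m3); have i4 := int_Z a4 (int_indic m4).
rewrite RintegralD //; [|exact: mI| exact: (int_D (int_D i1 i2) i3)].
rewrite RintegralD //; [|exact: mI| exact: (int_D i1 i2)].
rewrite RintegralD //; last exact: mI.
rewrite !RintegralZl //; try exact: mI; try exact: int_indic.
by rewrite !Rint_indic.
Qed.

Lemma g_lo (th phi : R) : 0 <= th <= pi -> 0 <= phi < pi ->
  g_theta th phi = if th <= phi then 1 / 2 else - (1 / 2).
Proof.
move=> /andP[t0 t1] /andP[p0 p1]; have hp := pi_pos R.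
rewrite /g_theta; have [h|h] := lerP th phi.
  rewrite (@red_uniq _ _ (phi - th) 0%Z); first by rewrite ifT //; lra.
    by apply/andP; split; lra.
  by rewrite intr0R mulr0 addr0.
rewrite (@red_uniq _ _ (phi - th + 2 * pi) (-1)%Z); first by rewrite ifF //; apply/negbTE; rewrite -leNgt; lra.
  by apply/andP; split; lra.
by rewrite (_ : (-1)%:~R = -1 :> R) //; ring.
Qed.

Lemma g_hi (th phi : R) : 0 <= th <= pi -> 0 <= phi < pi ->
  g_theta th (phi + pi) = if th <= phi then - (1 / 2) else 1 / 2.
Proof.
move=> /andP[t0 t1] /andP[p0 p1]; have hp := pi_pos R.
rewrite /g_theta; have [h|h] := lerP th phi.
  rewrite (@red_uniq _ _ (phi + pi - th) 0%Z); first by rewrite ifF //; apply/negbTE; rewrite -leNgt; lra.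
    by apply/andP; split; lra.
  by rewrite intr0R mulr0 addr0.
rewrite (@red_uniq _ _ (phi + pi - th) 0%Z); first by rewrite ifT //; lra.
  by apply/andP; split; lra.
by rewrite intr0R mulr0 addr0.
Qed.

Lemma indic1 (X : set T) x : X x -> (\1_X x : R) = 1.
Proof. by move=> h; rewrite indicE mem_set. Qed.
Lemma indic0 (X : set T) x : ~ X x -> (\1_X x : R) = 0.
Proof. by move=> h; rewrite indicE memNset. Qed.

Lemma itv_mem (i : interval R) (x : R) : (x \in ([set` i] : set R)) = (x \in i).
Proof. by apply/idP/idP; [rewrite in_setE | move=> h; apply: mem_set]. Qed.

Definition Psi (A D : set T) : R := m (A `&` D) - m (D `\` A).

Lemma h_int (A : set T) (phi c : R) (gg : R -> R) : measurable A -> A `<=` I ->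
  0 <= phi < pi ->
  (forall th, 0 <= th <= pi -> gg th = c * (if th <= phi then 1 / 2 else - (1 / 2))) ->
  Rintegral mu I (fun th => gg th * (\1_A th - \1_(I `\` A) th)) =
  c * (Psi A `[0, phi] - Psi A `]phi, pi]) / 2.
Proof.
move=> mA AI hphi hgg.
have mL : measurable (`[0, phi] : set T) by exact: itv_cara.
have mU : measurable (`]phi, pi] : set T) by exact: itv_cara.
have m1 : measurable (A `&` `[0, phi] : set T) by exact: measurableI.
have m2 : measurable (`[0, phi] `\` A : set T) by exact: measurableD.
have m3 : measurable (A `&` `]phi, pi] : set T) by exact: measurableI.
have m4 : measurable (`]phi, pi] `\` A : set T) by exact: measurableD.
have hp := pi_pos R.
have s1 : (A `&` `[0, phi] : set T) `<=` I by move=> x [/AI].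
have s2 : (`[0, phi] `\` A : set T) `<=` I.
  move=> x [] /=; rewrite /I0pi /= !in_itv /= => /andP[? ?] _; apply/andP; split; lra.
have s3 : (A `&` `]phi, pi] : set T) `<=` I by move=> x [/AI].
have s4 : (`]phi, pi] `\` A : set T) `<=` I.
  move=> x [] /=; rewrite /I0pi /= !in_itv /= => /andP[? ?] _; apply/andP; split; lra.
rewrite (@eq_Rintegral _ _ _ mu I
    (fun x => (c / 2) * \1_(A `&` `[0, phi]) x + (- (c / 2)) * \1_(`[0, phi] `\` A) x
      + (- (c / 2)) * \1_(A `&` `]phi, pi]) x + (c / 2) * \1_(`]phi, pi] `\` A) x) _).
  by rewrite Rint4 // /Psi; lra.
move=> th /set_mem; rewrite /I0pi /= in_itv /= => hth.
rewrite hgg //.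
have E : forall X : set T, (\1_X th : R) = if `[< X th >] then 1 else 0.
  by move=> X; rewrite indicE; case: asboolP => h; [rewrite mem_set|rewrite memNset].
rewrite !E /= !asbool_and !asbool_neg /= !asboolb !in_itv /=.
case: asboolP => hA; have [h|h] := lerP th phi; case/andP: hth => -> ->; rewrite /=; lra.
Qed.

Lemma h_formula (A : set T) (phi : R) : measurable A -> A `<=` I -> 0 <= phi < pi ->
  h_A A phi = pi / 2 + (Psi A `[0, phi] - Psi A `]phi, pi]) / 2 /\
  h_A A (phi + pi) = pi / 2 - (Psi A `[0, phi] - Psi A `]phi, pi]) / 2.
Proof.
move=> mA AI hphi; split; rewrite /h_A; congr (_ + _).
  rewrite (@h_int A phi 1 (fun th => g_theta th phi)) //; first by rewrite mul1r.
  by move=> th hth; rewrite mul1r g_lo.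
rewrite (@h_int A phi (-1) (fun th => g_theta th (phi + pi))) //.
  by rewrite mulN1r mulNr.
move=> th hth; rewrite g_hi //; case: ifP => _; lra.
Qed.

Lemma fin_sub (X : set T) : measurable X -> X `<=` I -> mu X \is a fin_num.
Proof.
move=> mX XI; rewrite ge0_fin_numE ?measure_ge0 //.
apply: le_lt_trans muI_fin; apply: le_measure => //; rewrite inE //; exact: mI.
Qed.

Lemma m_ge0 (X : set T) : 0 <= m X.
Proof. by apply: fine_ge0; apply: measure_ge0. Qed.

Lemma m_U (X Y : set T) : measurable X -> measurable Y -> X `<=` I -> Y `<=` I ->
  X `&` Y = set0 -> m (X `|` Y) = m X + m Y.
Proof.
move=> mX mY XI YI XY; rewrite measureU // fineD //; exact: fin_sub.
Qed.

Lemma Psi_U (A D1 D2 : set T) : measurable A -> measurable D1 -> measurable D2 ->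
  D1 `<=` I -> D2 `<=` I -> D1 `&` D2 = set0 ->
  Psi A (D1 `|` D2) = Psi A D1 + Psi A D2.
Proof.
move=> mA m1 m2 s1 s2 dj; rewrite /Psi setIUr setDUl.
rewrite m_U //; first last.
- by rewrite setIACA dj setI0.
- by move=> x [_ /s2].
- by move=> x [_ /s1].
- exact: measurableI.
- exact: measurableI.
rewrite m_U //; first last.
- by rewrite !setDE setIACA dj set0I.
- by move=> x [/s2].
- by move=> x [/s1].
- exact: measurableD.
- exact: measurableD.
ring.
Qed.

Lemma Psi_bound (A D : set T) : measurable A -> measurable D -> D `<=` I ->
  `|Psi A D| <= m D.
Proof.
move=> mA mD DI.
have -> : m D = m (A `&` D) + m (D `\` A).
  rewrite -m_U //; first last.
  - by apply/seteqP; split => x //= [[hA _] [_ hnA]].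
  - by move=> x [/DI].
  - by move=> x [_ /DI].
  - exact: measurableD.
  - exact: measurableI.
  by rewrite setIC setUIDK.
rewrite /Psi; have := m_ge0 (A `&` D); have := m_ge0 (D `\` A).
move=> h1 h2; rewrite ler_norml; apply/andP; split; lra.
Qed.

End P3.

Section P3b.
Variable R : realType.
Local Notation T := (caratheodory_type (R:=R) (wlength (@idfun R))^*%mu).
Local Notation mu := (@completed_lebesgue_measure R).
Local Notation I := (@I0pi R).
Local Notation m B := (fine (mu B)).

Lemma m_cc (t : R) : 0 <= t -> m (`[0, t] : set T) = t.
Proof.
move=> t0; rewrite mu_itv /=; case: ltP => h /=; first by rewrite subr0.
by apply/eqP; rewrite eq_le t0 /=; move: h; rewrite lee_fin.
Qed.

Lemma m_oc (s t : R) : s <= t -> m (`]s, t] : set T) = t - s.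
Proof.
move=> st; rewrite mu_itv /=; case: ltP => h /=; first by [].
by apply/eqP; rewrite eq_le subr_ge0 st /= subr_le0; move: h; rewrite lee_fin.
Qed.

Lemma itv_split (s t : R) : 0 <= s <= t ->
  `[0, t]%classic = `[0, s]%classic `|` `]s, t]%classic :> set R.
Proof.
move=> /andP[s0 st]; apply/seteqP; split => x /=; rewrite ?in_itv /=.
  move=> /andP[h1 h2]; have [h|h] := lerP x s; [left|right]; rewrite /= ?in_itv /= ?andbT ?h1 ?h2 //.
by case => /andP[h1 h2]; apply/andP; split; lra.
Qed.

Lemma itv_disj (s t : R) : `[0, s]%classic `&` `]s, t]%classic = set0 :> set R.
Proof.
apply/seteqP; split => x //=; rewrite !in_itv /= => -[/andP[h1 h2] /andP[h3 h4]]; lra.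
Qed.

End P3b.

Section P4.
Variable R : realType.
Local Notation d := (@circ_dist R).

Lemma decomp (x : R) : exists a (k : int), 0 <= a < pi /\
  (x = a + 2 * pi * k%:~R \/ x = a + pi + 2 * pi * k%:~R).
Proof.
have [/andP[r0 r1] [k hk]] := red_spec x.
have hp := pi_pos R.
have [h|h] := ltrP (circ_red x) pi.
  by exists (circ_red x), k; split; [apply/andP; split|left].
exists (circ_red x - pi), k; split; first by apply/andP; split; lra.
by right; rewrite {1}hk; ring.
Qed.

Lemma Pc_of_base (f : R -> R) : circ_periodic f ->
  (forall a, 0 <= a < pi -> f a + f (a + pi) = pi) ->
  (forall a b, 0 <= a < pi -> 0 <= b < pi ->
     `|f a - f b| <= `|a - b| /\ `|f a + f b - pi| <= pi - `|a - b|) ->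
  Pc f.
Proof.
move=> fp fa fb.
have fa' : forall x, f x + f (x + pi) = pi.
  move=> x; have [a [k [ha [->| ->]]]] := decomp x.
    rewrite (_ : a + 2 * pi * k%:~R + pi = (a + pi) + 2 * pi * k%:~R); last by ring.
    by rewrite !periodic_int // fa.
  rewrite (_ : a + pi + 2 * pi * k%:~R + pi = a + 2 * pi * (k + 1)%:~R); last first.
    by rewrite intrD (_ : (1 : int)%:~R = 1 :> R) //; ring.
  by rewrite !periodic_int // addrC fa.
split => // x y.
have [a [k [ha ex]]] := decomp x; have [b [l [hb ey]]] := decomp y.
have hp := pi_pos R.
have [h1 h2] := fb a b ha hb.
move: h1 h2; rewrite ler_norml => /andP[h1 h1'].
have := normr_ge0 (a - b) => hn.
rewrite ler_norml => /andP[h2 h2'].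
have dab : d a b = `|a - b| by rewrite dist_small.
have faa := fa a ha; have fbb := fa b hb.
case: ex => ->; case: ey => ->; rewrite !(periodic_int fp) dist_shiftl dist_shiftr.
- rewrite dab; lra.
- rewrite dist_pir dab; lra.
- rewrite dist_pi dab; lra.
- rewrite dist_pi dist_pir dab; lra.
Qed.

End P4.

Section P4b.
Variable R : realType.
Local Notation T := (caratheodory_type (R:=R) (wlength (@idfun R))^*%mu).
Local Notation mu := (@completed_lebesgue_measure R).
Local Notation I := (@I0pi R).
Local Notation m B := (fine (mu B)).

Definition Phi (A : set T) (t : R) := Psi A `[0, t]%classic.

Lemma cc_sub (t : R) : t <= pi -> (`[0, t]%classic : set T) `<=` I.
Proof. move=> tp x; rewrite /I0pi /= !in_itv /= => /andP[h1 h2]; apply/andP; split; lra. Qed.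

Lemma oc_sub (s t : R) : 0 <= s -> t <= pi -> (`]s, t]%classic : set T) `<=` I.
Proof. move=> s0 tp x; rewrite /I0pi /= !in_itv /= => /andP[h1 h2]; apply/andP; split; lra. Qed.

Lemma Phi_split (A : set T) (s t : R) : measurable A -> 0 <= s -> s <= t -> t <= pi ->
  Phi A t = Phi A s + Psi A `]s, t]%classic.
Proof.
move=> mA s0 st tp; rewrite /Phi (itv_split (s := s)); last by apply/andP.
apply: Psi_U => //; try exact: itv_cara.
- apply: cc_sub; lra.
- exact: oc_sub.
- exact: itv_disj.
Qed.

Lemma Phi_lip (A : set T) (s t : R) : measurable A -> 0 <= s -> s <= t -> t <= pi ->
  `|Phi A t - Phi A s| <= t - s.
Proof.
move=> mA s0 st tp; rewrite (Phi_split mA s0 st tp) (addrC (Phi A s)) addrK.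
rewrite -(m_oc st); apply: Psi_bound => //; first exact: itv_cara.
exact: oc_sub.
Qed.

Lemma Phi_bnd (A : set T) (s : R) : measurable A -> 0 <= s -> s <= pi ->
  `|Phi A s| <= s.
Proof.
move=> mA s0 sp; rewrite -{2}(m_cc s0); apply: Psi_bound => //; first exact: itv_cara.
exact: cc_sub.
Qed.

Lemma h_lohi (A : set T) (phi : R) : measurable A -> A `<=` I -> 0 <= phi < pi ->
  h_A A phi = pi / 2 + Phi A phi - Phi A pi / 2 /\
  h_A A (phi + pi) = pi / 2 - Phi A phi + Phi A pi / 2.
Proof.
move=> mA AI hphi; have [e1 e2] := h_formula mA AI hphi.
case/andP: hphi => p0 p1.
have := Phi_split mA p0 (ltW p1) (lexx _); rewrite /Phi => e3.
rewrite e1 e2 /Phi e3; split; lra.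
Qed.

Lemma Pc_hA (A : set T) : measurable A -> A `<=` I -> Pc (h_A A).
Proof.
move=> mA AI; have hp := pi_pos R.
apply: Pc_of_base.
- move=> x; rewrite /h_A; congr (_ + _); apply: eq_Rintegral => th _.
  rewrite /g_theta (_ : x + 2 * pi - th = (x - th) + 2 * pi * (1 : int)%:~R) ?red_shift //.
  by rewrite (_ : (1 : int)%:~R = 1 :> R) //; ring.
- move=> a ha; have [-> ->] := h_lohi mA AI ha; lra.
- move=> a b ha hb; have [-> _] := h_lohi mA AI ha; have [-> _] := h_lohi mA AI hb.
  case/andP: ha => a0 a1; case/andP: hb => b0 b1.
  have Pb := Phi_bnd mA a0 (ltW a1); have Pb' := Phi_bnd mA b0 (ltW b1).
  have [ab|ba] := lerP a b.
    have L := Phi_lip mA a0 ab (ltW b1).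
    have L2 := Phi_lip mA b0 (ltW b1) (lexx _).
    move: Pb L L2; rewrite !ler_norml => /andP[? ?] /andP[? ?] /andP[? ?].
    by split; apply/andP; split; lra.
  have L := Phi_lip mA b0 (ltW ba) (ltW a1).
  have L2 := Phi_lip mA a0 (ltW a1) (lexx _).
  move: Pb' L L2; rewrite !ler_norml => /andP[? ?] /andP[? ?] /andP[? ?].
  by split; apply/andP; split; lra.
Qed.

End P4b.

Section Comb.
Variable R : realType.
Variable n : nat.
Variable p : 'I_n -> R.

Definition wt (F : {ffun 'I_n -> bool}) : R :=
  \prod_(i < n) (if F i then p i else 1 - p i).

Definition sgnb (b : bool) : R := if b then 1 else -1.

Lemma wt_sum1 : \sum_(F : {ffun 'I_n -> bool}) wt F = 1.
Proof.
rewrite /wt -(bigA_distr_bigA (fun i (b : bool) => if b then p i else 1 - p i)) /=.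
by apply: big1 => i _; rewrite big_bool /=; ring.
Qed.

Lemma wt_ge0 F : (forall i, 0 <= p i <= 1) -> 0 <= wt F.
Proof.
move=> hp; apply: prodr_ge0 => i _; have /andP[h1 h2] := hp i.
by case: (F i) => //; rewrite subr_ge0.
Qed.

Lemma wt_sgn (j : 'I_n) :
  \sum_(F : {ffun 'I_n -> bool}) wt F * sgnb (F j) = 2 * p j - 1.
Proof.
pose G i (b : bool) := (if b then p i else 1 - p i) * (if i == j then sgnb b else 1).
have e : forall F : {ffun 'I_n -> bool}, wt F * sgnb (F j) = \prod_(i < n) G i (F i).
  move=> F; rewrite /G big_split /=; congr (_ * _).
  by rewrite (bigD1 j) //= eqxx big1 ?mulr1 // => i /negbTE ->.
rewrite (eq_bigr _ (fun F _ => e F)) -(bigA_distr_bigA G) /=.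
rewrite (bigD1 j) //= [X in _ * X]big1.
  by rewrite /G big_bool /= eqxx /sgnb; ring.
by move=> i /negbTE ij; rewrite big_bool /G /= ij; ring.
Qed.

End Comb.

Section Grid.
Variable R : realType.
Variable N : nat.
Local Notation n := N.+1.
Local Notation T := (caratheodory_type (R:=R) (wlength (@idfun R))^*%mu).
Local Notation mu := (@completed_lebesgue_measure R).
Local Notation I := (@I0pi R).
Local Notation m B := (fine (mu B)).

Definition hh : R := pi / n%:R.
Definition xg (k : nat) : R := k%:R * hh.
Definition Aset (F : {ffun 'I_n -> bool}) : set R :=
  \bigcup_(k in [set k : nat | (k < n)%N /\ F (inord k)]) `]xg k, xg k.+1]%classic.

Lemma hh_pos : 0 < hh.
Proof. by rewrite divr_gt0 // pi_pos. Qed.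

Lemma xgS k : xg k.+1 = xg k + hh.
Proof. by rewrite /xg -natr1 mulrDl mul1r. Qed.

Lemma xg0 : xg 0 = 0.
Proof. by rewrite /xg mul0r. Qed.

Lemma xgn : xg n = pi.
Proof. by rewrite /xg /hh mulrC -mulrA mulVf ?mulr1 // pnatr_eq0. Qed.

Lemma xg_mono a b : (a <= b)%N -> xg a <= xg b.
Proof. by move=> ab; rewrite /xg ler_pM2r ?hh_pos // ler_nat. Qed.

Lemma xg_ge0 k : 0 <= xg k.
Proof. by rewrite -xg0 xg_mono. Qed.

Lemma xg_le_pi k : (k <= n)%N -> xg k <= pi.
Proof. by move=> kn; rewrite -xgn xg_mono. Qed.

Lemma itv_unique j k th : xg j < th <= xg j.+1 -> xg k < th <= xg k.+1 -> j = k.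
Proof.
move=> /andP[h1 h2] /andP[h3 h4]; apply/eqP; rewrite eqn_leq; apply/andP; split.
  rewrite leqNgt; apply/negP => kj; have := xg_mono kj; lra.
rewrite leqNgt; apply/negP => jk; have := xg_mono jk; lra.
Qed.

Lemma A_meas F : measurable (Aset F : set T).
Proof. by apply: bigcup_measurable => k _; exact: itv_cara. Qed.

Lemma A_sub F : (Aset F : set T) `<=` I.
Proof.
move=> th [k /= [kn _]]; rewrite in_itv /= => /andP[h1 h2].
rewrite /I0pi /= in_itv /=.
have := xg_ge0 k; have := xg_le_pi kn; move=> ? ?; apply/andP; split; lra.
Qed.

Lemma A_int F k : (k < n)%N ->
  (Aset F `&` `]xg k, xg k.+1]%classic : set T) =
    if F (inord k) then `]xg k, xg k.+1]%classic else set0.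
Proof.
move=> kn; apply/seteqP; split => th.
  move=> [[j /= [jn Fj]] hj hk]; rewrite (itv_unique hj hk) in Fj.
  by rewrite Fj.
case: ifP => // Fk hk; split => //; exists k => //.
Qed.

Lemma D_int F k : (k < n)%N ->
  (`]xg k, xg k.+1]%classic `\` Aset F : set T) =
    if F (inord k) then set0 else `]xg k, xg k.+1]%classic.
Proof.
move=> kn; apply/seteqP; split => th.
  move=> [hk hA]; case: ifP => // Fk; apply: hA; exists k => //.
case: ifP => // Fk hk; split => // -[j /= [jn Fj] hj].
by rewrite (itv_unique hj hk) Fk in Fj.
Qed.

Lemma Psi_grid F k : (k < n)%N ->
  Psi (Aset F) `]xg k, xg k.+1]%classic = @sgnb R (F (inord k)) * hh.
Proof.
move=> kn; rewrite /Psi A_int // D_int // /sgnb.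
have hm : m (`]xg k, xg k.+1]%classic : set T) = hh.
  rewrite m_oc; first by rewrite xgS; ring.
  by rewrite xgS lerDl ltW // hh_pos.
case: ifP => _; rewrite measure0 /= hm; ring.
Qed.

Lemma Phi_grid F k : (k <= n)%N ->
  Phi (Aset F) (xg k) = \sum_(i < k) @sgnb R (F (inord i)) * hh.
Proof.
elim: k => [_|k IH kn].
  rewrite big_ord0 xg0; apply/eqP; rewrite -normr_le0.
  by have := Phi_bnd (A_meas F) (lexx 0) (ltW (pi_pos R)).
rewrite (Phi_split (A_meas F) (xg_ge0 k) (xg_mono (leqnSn k)) (xg_le_pi kn)).
by rewrite IH ?(ltnW kn) // Psi_grid // big_ord_recr.
Qed.

End Grid.

Lemma sum_enum (R : realType) (Tf : finType) (G : Tf -> R) :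
  \sum_(i < #|Tf|) G (enum_val (A := Tf) i) = \sum_(F : Tf) G F.
Proof.
rewrite -(big_enum_val (A := Tf)) /=. by apply: eq_bigl => x; rewrite inE.
Qed.

Section Approx.
Variable R : realType.
Local Notation d := (@circ_dist R).

Lemma Pc_lipabs (f : R -> R) : Pc f -> forall x y, `|f x - f y| <= d x y.
Proof.
case=> _ _ hl x y; rewrite ler_norml; have := hl x y; have := hl y x.
rewrite dist_sym; move=> ? ?; apply/andP; split; lra.
Qed.

Lemma Pc_close (f1 f2 : R -> R) (E : R) : Pc f1 -> Pc f2 ->
  (forall a, 0 <= a < pi -> `|f1 a - f2 a| <= E) -> forall x, `|f1 x - f2 x| <= E.
Proof.
move=> [p1 a1 _] [p2 a2 _] h x.
have [a [k [ha [->| ->]]]] := decomp x; rewrite !periodic_int //; first exact: h.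
have := a1 a; have := a2 a; have := h a ha; rewrite !ler_norml => /andP[? ?] ? ?.
apply/andP; split; lra.
Qed.

Variable f : R -> R.
Hypothesis hf : Pc f.
Variable N : nat.
Local Notation n := N.+1.
Local Notation xg := (@xg R N).
Local Notation hh := (@hh R N).

Definition cc (i : 'I_n) : R := (f (xg i.+1) - f (xg i)) / hh.
Definition pp (i : 'I_n) : R := (1 + cc i) / 2.

Lemma step_bnd k : `|f (xg k.+1) - f (xg k)| <= hh.
Proof.
apply: le_trans (Pc_lipabs hf _ _) _; apply: le_trans (dist_abs _ _) _.
by rewrite xgS addrAC subrr add0r ger0_norm // ltW // hh_pos.
Qed.

Lemma pp_01 i : 0 <= pp i <= 1.
Proof.
have := step_bnd i; rewrite ler_norml => /andP[h1 h2].
have hp := hh_pos R N.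
have : -1 <= cc i <= 1.
  rewrite /cc ler_pdivlMr // ler_pdivrMr //; apply/andP; split; lra.
move=> /andP[? ?]; rewrite /pp; apply/andP; split; lra.
Qed.

Local Notation Tf := {ffun 'I_n -> bool}.

Definition gw (i : 'I_#|Tf|) : R := wt pp (enum_val (A := Tf) i).
Definition gfs (i : 'I_#|Tf|) : R -> R := h_A (Aset (enum_val (A := Tf) i)).
Definition gg (x : R) : R := \sum_(i < #|Tf|) gw i * gfs i x.

Lemma gw_ge0 i : 0 <= gw i.
Proof. exact: wt_ge0 pp_01. Qed.

Lemma gw_sum : \sum_(i < #|Tf|) gw i = 1.
Proof. by rewrite /gw (sum_enum (fun F => wt pp F)) wt_sum1. Qed.

Lemma gfs_fam i : hA_family (gfs i).
Proof.
exists (Aset (enum_val (A := Tf) i)); split => //.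
- exact: A_meas.
- exact: A_sub.
Qed.

Lemma gg_Pc : Pc gg.
Proof.
apply: Pc_conv => //; first by move=> i; have [A [mA AI ->]] := gfs_fam i; exact: Pc_hA.
- exact: gw_ge0.
- exact: gw_sum.
Qed.

Lemma cc_sum (k : nat) : (k <= n)%N ->
  \sum_(F : Tf) wt pp F * (\sum_(i < k) @sgnb R (F (inord i)) * hh) = f (xg k) - f 0.
Proof.
move=> kn.
rewrite (eq_bigr (fun F => \sum_(i < k) wt pp F * @sgnb R (F (inord i)) * hh)); last first.
  by move=> F _; rewrite mulr_sumr; apply: eq_bigr => i _; rewrite mulrA.
rewrite exchange_big /=.
rewrite (eq_bigr (fun i : 'I_k => f (xg i.+1) - f (xg i))); last first.
  move=> i _; rewrite -mulr_suml wt_sgn.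
  have ik : (i < n)%N by apply: leq_trans (ltn_ord i) kn.
  rewrite (_ : 2 * pp (inord i) - 1 = cc (inord i)); last by rewrite /pp; field.
  by rewrite /cc inordK // divfK // gt_eqF // hh_pos.
have Tl := @telescope_sumr _ 0 k (fun i => f (xg i)) (leq0n k).
rewrite big_mkord /= in Tl => //; rewrite xg0 in Tl; exact: Tl.
Qed.

Lemma gg_grid k : (k < n)%N -> gg (xg k) = f (xg k).
Proof.
move=> kn.
have hx : 0 <= xg k < pi.
  rewrite xg_ge0 /=; have := @xg_le_pi R N k.+1 kn; have := hh_pos R N.
  rewrite xgS; lra.
rewrite /gg /gw /gfs (sum_enum (fun F => wt pp F * h_A (Aset F) (xg k))).
rewrite (eq_bigr (fun F => wt pp F * (pi / 2) + wt pp F * (\sum_(i < k) @sgnb R (F (inord i)) * hh)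
   - (wt pp F * (\sum_(i < n) @sgnb R (F (inord i)) * hh)) / 2)); last first.
  move=> F _; have [-> _] := h_lohi (A_meas F) (@A_sub R N F) hx.
  rewrite -(xgn R N) !Phi_grid // ?(ltnW kn) //; ring.
rewrite big_split big_split /= -mulr_suml wt_sum1 sumrN -mulr_suml.
rewrite !cc_sum // ?(ltnW kn) // (xgn R N).
case: hf => _ ha _; have := ha 0; rewrite add0r; lra.
Qed.

Lemma gg_approx x : `|f x - gg x| <= 2 * hh.
Proof.
apply: (Pc_close hf gg_Pc) => a /andP[a0 a1].
have hp := hh_pos R N.
have ha : 0 <= a / hh by rewrite divr_ge0 // ltW.
set k := Num.trunc (a / hh).
have /andP[k1 k2] := truncn_itv ha.
have kn : (k < n)%N.
  rewrite truncn_lt_nat // ltr_pdivrMr //.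
  by move: (xgn R N); rewrite /xg => ->.
have e1 : xg k <= a by rewrite /xg -ler_pdivlMr.
have e2 : a < xg k + hh by rewrite -xgS /xg -ltr_pdivrMr.
have l1 := Pc_lipabs hf a (xg k); have l2 := Pc_lipabs gg_Pc a (xg k).
have dd : d a (xg k) <= hh.
  apply: le_trans (dist_abs _ _) _; rewrite ger0_norm; lra.
rewrite gg_grid // in l2.
move: l1 l2; rewrite !ler_norml => /andP[? ?] /andP[? ?]; apply/andP; split; lra.
Qed.

End Approx.

Theorem theorem3p21 (R : realType) :
  sup_closure (conv_hull (@hA_family R)) = @tight_span_circ R.
Proof.
apply/seteqP; split => f hf.
  apply: Pc_tight; apply: Pc_closure hf => g [n [w [fs [hfs w0 w1 ->]]]].
  apply: Pc_conv => // i; have [A [mA AI ->]] := hfs i; exact: Pc_hA.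
have hP := tight_Pc hf.
move=> e e0.
set N := Num.trunc (2 * pi / e).
exists (gg f N); split.
  exists #|{ffun 'I_N.+1 -> bool}|, (@gw R f N), (@gfs R N); split => //.
  - exact: gfs_fam.
  - exact: gw_ge0.
  - exact: gw_sum.
move=> x; apply: le_trans (gg_approx hP N x) _.
have hp := pi_pos R.
have h0 : 0 <= 2 * pi / e by rewrite divr_ge0 // ?ltW // mulr_gt0.
have /andP[_ h2] := truncn_itv h0.
move: h2; rewrite ltr_pdivrMr // => h3.
rewrite /hh mulrA ler_pdivrMr ?ltr0Sn //.
rewrite -/N in h3; lra.
Qed.
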